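(* Consider the program $\mathsf{P}$ of $\mathcal{H}$ consisting of the four clauses $\mathsf{s}\,\mathsf{Q}\leftarrow\mathsf{Q}\,(\mathsf{s}\,\mathsf{Q})$; $\mathsf{p}\,\mathsf{R}\leftarrow\mathsf{R}$; $\mathsf{q}\,\mathsf{R}\leftarrow\,\sim(\mathsf{w}\,\mathsf{R})$; $\mathsf{w}\,\mathsf{R}\leftarrow\,\sim\mathsf{R}$, where $\mathsf{Q}$ is a predicate variable of type $o\to o$, $\mathsf{R}$ is a predicate variable of type $o$, $\mathsf{p},\mathsf{q},\mathsf{w}$ are predicate constants of type $o\to o$ and $\mathsf{s}$ is a predicate constant of type $(o\to o)\to o$. Then the Herbrand interpretation $\mathcal{M}_\mathsf{P}$ of $\mathsf{P}$ (whose valuation function is the well-founded model of $\mathsf{Gr(P)}$) is not extensional.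
   Context: Types of $\mathcal{H}$: base types $\iota,o$; predicate types $\pi ::= o\mid\rho\to\pi$; argument types $\rho::=\iota\mid\pi$. Terms are built from variables, constants and function symbols by typed application; atoms are terms of type $o$; literals are atoms, equalities between terms of type $\iota$, and negated atoms $\sim\mathsf{E}$. For a program $\mathsf{P}$, $U_{\mathsf{P},\rho}$ is the set of ground terms of argument type $\rho$ built from the constants and function symbols occurring in $\mathsf{P}$. The ground instantiation $\mathsf{Gr(P)}$ is the set of all clauses obtained from clauses of $\mathsf{P}$ by replacing every variable by an element of $U_{\mathsf{P},\rho}$ of the same type; it is regarded as a (possibly infinite) propositional program with the ground atoms as propositional variables (ground equalities being the constants true/false according to syntactic identity). The well-founded model of $\mathsf{Gr(P)}$ is the usual (three-valued, values $\mathit{false},0,\mathit{true}$) well-founded model of this propositional program. $\mathcal{M}_\mathsf{P}$ is the Herbrand interpretation of $\mathsf{P}$ (symbols interpreted by themselves, application syntactic) whose valuation $v$ assigns to each ground atom its value in the well-founded model of $\mathsf{Gr(P)}$, with $v(\sim\mathsf{E})$ swapping $\mathit{true}/\mathit{false}$ and fixing $0$. Extensional equality: for a valuation $v$ and argument type $\rho$, the relation $\cong_{v,\rho}$ on $U_{\mathsf{P},\rho}$ is defined by: for $\rho=\iota$, $d\cong d'$ iff $d=d'$; for $\rho=o$, $d\cong d'$ iff $v(d)=v(d')$; for $\rho=\rho'\to\pi$, $d\cong_{v,\rho}d'$ iff $(d\,e)\cong_{v,\pi}(d'\,e')$ for all $e,e'\in U_{\mathsf{P},\rho'}$ with $e\cong_{v,\rho'}e'$.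 A Herbrand interpretation $I$ with valuation $v_I$ is extensional if for every argument type $\rho$ the relation $\cong_{v_I,\rho}$ is reflexive, i.e. $\mathsf{E}\cong_{v_I,\rho}\mathsf{E}$ for all $\mathsf{E}\in U_{\mathsf{P},\rho}$. *)

(* Defs.v *)
From Stdlib Require Import List ClassicalEpsilon.
Import ListNotations.

Inductive ty : Type := tI | tO | tArr (a b : ty).

Definition ty_eq_dec (a b : ty) : {a = b} + {a <> b}.
Proof. decide equality. Defined.

(* predicate types  pi ::= o | rho -> pi ;  argument types rho ::= iota | pi *)
Fixpoint is_pred (t : ty) : bool :=
  match t with
  | tI => false
  | tO => true
  | tArr a b =>
      (match a with tI => true | _ => is_pred a end) && is_pred b
  end.
Definition is_arg (t : ty) : bool :=
  match t with tI => true | _ => is_pred t end.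

(** * Terms: variables and constants/function symbols carry their type;
    a symbol is identified by (name, type). *)
Inductive term : Type :=
| V (x : nat) (t : ty)
| C (c : nat) (t : ty)
| Ap (f e : term).

Fixpoint type_of (e : term) : option ty :=
  match e with
  | V _ t => Some t
  | C _ t => Some t
  | Ap f a =>
      match type_of f, type_of a with
      | Some (tArr t1 t2), Some t1' =>
          if ty_eq_dec t1 t1' then Some t2 else None
      | _, _ => None
      end
  end.

Fixpoint vars_of (e : term) : list (nat * ty) :=
  match e with
  | V x t => [(x, t)]
  | C _ _ => []
  | Ap f a => vars_of f ++ vars_of a
  end.

Fixpoint consts_of (e : term) : list (nat * ty) :=
  match e with
  | V _ _ => []
  | C c t => [(c, t)]
  | Ap f a => consts_of f ++ consts_of a
  end.

Inductive lit : Type :=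
| LAtom (e : term)
| LEq (e1 e2 : term)        (* equality between terms of type iota *)
| LNeg (e : term).

Definition lit_terms (l : lit) : list term :=
  match l with LAtom e => [e] | LEq e1 e2 => [e1; e2] | LNeg e => [e] end.

Record clause : Type := Clause { head : term; body : list lit }.
Definition program := list clause.

Definition clause_terms (c : clause) : list term :=
  head c :: flat_map lit_terms (body c).
Definition clause_vars (c : clause) : list (nat * ty) :=
  flat_map vars_of (clause_terms c).
Definition prog_consts (P : program) : list (nat * ty) :=
  flat_map (fun c => flat_map consts_of (clause_terms c)) P.

Definition UP (P : program) (rho : ty) (e : term) : Prop :=
  vars_of e = [] /\ type_of e = Some rho /\
  (forall s, In s (consts_of e) -> In s (prog_consts P)).

Fixpoint subst (th : nat -> ty -> term) (e : term) : term :=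
  match e with
  | V x t => th x t
  | C c t => C c t
  | Ap f a => Ap (subst th f) (subst th a)
  end.

Definition subst_lit th (l : lit) : lit :=
  match l with
  | LAtom e => LAtom (subst th e)
  | LEq e1 e2 => LEq (subst th e1) (subst th e2)
  | LNeg e => LNeg (subst th e)
  end.

Definition subst_clause th (c : clause) : clause :=
  Clause (subst th (head c)) (map (subst_lit th) (body c)).

Definition Gr (P : program) (g : clause) : Prop :=
  exists c th, In c P /\
    (forall x t, In (x, t) (clause_vars c) -> UP P t (th x t)) /\
    g = subst_clause th c.

(** * Well-founded model of the (possibly infinite) propositional program
    Gr(P), whose propositional variables are the ground atoms; ground
    equalities are true/false according to syntactic identity.
    We use the alternating-fixpoint characterisation (Van Gelder):
    Gamma J = least model of the Gelfond-Lifschitz reduct Gr(P)/J;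
    true atoms = lfp (Gamma o Gamma), non-false atoms = Gamma (true atoms). *)

Definition lit_holds (S J : term -> Prop) (l : lit) : Prop :=
  match l with
  | LAtom a => S a
  | LEq e1 e2 => e1 = e2
  | LNeg a => ~ J a
  end.

Definition Gamma (P : program) (J : term -> Prop) : term -> Prop :=
  fun a => forall S : term -> Prop,
    (forall g, Gr P g -> (forall l, In l (body g) -> lit_holds S J l) ->
               S (head g)) ->
    S a.

Definition wf_true (P : program) : term -> Prop :=
  fun a => forall S : term -> Prop,
    (forall b, Gamma P (Gamma P S) b -> S b) -> S a.

Definition wf_nonfalse (P : program) : term -> Prop :=
  Gamma P (wf_true P).

Inductive tv : Type := vFalse | vZero | vTrue.

Definition MP_val (P : program) (a : term) : tv :=
  if excluded_middle_informative (wf_true P a) then vTrue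
  else if excluded_middle_informative (wf_nonfalse P a) then vZero
  else vFalse.

Fixpoint ext_eq (P : program) (v : term -> tv) (rho : ty) (d d' : term)
  : Prop :=
  match rho with
  | tI => d = d'
  | tO => v d = v d'
  | tArr r pi =>
      forall e e', UP P r e -> UP P r e' -> ext_eq P v r e e' ->
                   ext_eq P v pi (Ap d e) (Ap d' e')
  end.

Definition extensional (P : program) (v : term -> tv) : Prop :=
  forall rho, is_arg rho = true ->
    forall E, UP P rho E -> ext_eq P v rho E E.

Definition oo := tArr tO tO.
Definition cp := C 0 oo.
Definition cq := C 1 oo.
Definition cw := C 2 oo.
Definition cs := C 3 (tArr oo tO).
Definition vQ := V 0 oo.
Definition vR := V 1 tO.

Definition P0 : program :=
  [ Clause (Ap cs vQ) [LAtom (Ap vQ (Ap cs vQ))];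
    Clause (Ap cp vR) [LAtom vR];
    Clause (Ap cq vR) [LNeg (Ap cw vR)];
    Clause (Ap cw vR) [LNeg vR] ].

(* Main.v *)
Require Import Defs.
From Stdlib Require Import List Classical ClassicalEpsilon.
Import ListNotations.

Lemma Gr_inv g : Gr P0 g ->
  (exists X, g = Clause (Ap cs X) [LAtom (Ap X (Ap cs X))]) \/
  (exists R, g = Clause (Ap cp R) [LAtom R]) \/
  (exists R, g = Clause (Ap cq R) [LNeg (Ap cw R)]) \/
  (exists R, g = Clause (Ap cw R) [LNeg R]).
Proof.
  intros [c [th [Hc [_ ->]]]].
  simpl in Hc; destruct Hc as [<-|[<-|[<-|[<-|[]]]]]; unfold subst_clause; simpl.
  - left; eauto.
  - right; left; eauto.
  - right; right; left; eauto.
  - right; right; right; eauto.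
Qed.

Lemma Gr_s X : UP P0 oo X -> Gr P0 (Clause (Ap cs X) [LAtom (Ap X (Ap cs X))]).
Proof.
  intros H. exists (nth 0 P0 (Clause cs [])), (fun _ _ => X). simpl. split; [tauto|]. split.
  - intros x t Hi. simpl in Hi. repeat (destruct Hi as [E|Hi]; [inversion E; subst; exact H|]); destruct Hi.
  - reflexivity.
Qed.

Lemma Gr_p R : UP P0 tO R -> Gr P0 (Clause (Ap cp R) [LAtom R]).
Proof.
  intros H. exists (nth 1 P0 (Clause cs [])), (fun _ _ => R). simpl. split; [tauto|]. split.
  - intros x t Hi. simpl in Hi. repeat (destruct Hi as [E|Hi]; [inversion E; subst; exact H|]); destruct Hi.
  - reflexivity.
Qed.

Lemma Gr_q R : UP P0 tO R -> Gr P0 (Clause (Ap cq R) [LNeg (Ap cw R)]).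
Proof.
  intros H. exists (nth 2 P0 (Clause cs [])), (fun _ _ => R). simpl. split; [tauto|]. split.
  - intros x t Hi. simpl in Hi. repeat (destruct Hi as [E|Hi]; [inversion E; subst; exact H|]); destruct Hi.
  - reflexivity.
Qed.

Lemma Gr_w R : UP P0 tO R -> Gr P0 (Clause (Ap cw R) [LNeg R]).
Proof.
  intros H. exists (nth 3 P0 (Clause cs [])), (fun _ _ => R). simpl. split; [tauto|]. split.
  - intros x t Hi. simpl in Hi. repeat (destruct Hi as [E|Hi]; [inversion E; subst; exact H|]); destruct Hi.
  - reflexivity.
Qed.

Definition closed (J S : term -> Prop) :=
  forall g, Gr P0 g -> (forall l, In l (Defs.body g) -> lit_holds S J l) -> S (Defs.head g).

Lemma Gamma_ind J S a : closed J S -> Gamma P0 J a -> S a.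
Proof. intros H G; exact (G S H). Qed.

Lemma Gamma_rule J g : Gr P0 g ->
  (forall l, In l (Defs.body g) -> lit_holds (Gamma P0 J) J l) -> Gamma P0 J (Defs.head g).
Proof.
  intros Hg Hb S HS. apply HS; auto.
  intros l Hl. specialize (Hb l Hl). destruct l; simpl in *; auto.
  apply Hb; exact HS.
Qed.

Lemma Gamma_p J e : UP P0 tO e -> (Gamma P0 J (Ap cp e) <-> Gamma P0 J e).
Proof.
  intros He; split.
  - intros G S HS.
    assert (H : (fun a => S a /\ forall x, a = Ap cp x -> S x) (Ap cp e)).
    { refine (Gamma_ind J (fun a => S a /\ forall x, a = Ap cp x -> S x) _ _ G).
      intros g Hg Hb. split.
      + apply HS; auto. intros l Hl; specialize (Hb l Hl); destruct l; simpl in *; tauto.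
      + intros x Hx. destruct (Gr_inv g Hg) as [[X ->]|[[R ->]|[[R ->]|[R ->]]]];
          simpl in Hx; inversion Hx; subst.
        specialize (Hb (LAtom x) (or_introl eq_refl)); simpl in Hb; tauto. }
    apply (proj2 H); reflexivity.
  - intros G S HS.
    assert (H : (fun a => S a /\ (UP P0 tO a -> S (Ap cp a))) e).
    { refine (Gamma_ind J (fun a => S a /\ (UP P0 tO a -> S (Ap cp a))) _ _ G).
      intros g Hg Hb.
      assert (Sh : S (Defs.head g)).
      { apply HS; auto. intros l Hl; specialize (Hb l Hl); destruct l; simpl in *; tauto. }
      split; auto. intros U.
      apply (HS _ (Gr_p _ U)). simpl. intros l [<-|[]]; simpl; auto. }
    apply (proj2 H); auto.
Qed.

Lemma Gamma_q J e : UP P0 tO e -> (Gamma P0 J (Ap cq e) <-> ~ J (Ap cw e)).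
Proof.
  intros He; split.
  - intros G.
    assert (H : (fun a => forall x, a = Ap cq x -> ~ J (Ap cw x)) (Ap cq e)).
    { refine (Gamma_ind J (fun a => forall x, a = Ap cq x -> ~ J (Ap cw x)) _ _ G).
      intros g Hg Hb x Hx. destruct (Gr_inv g Hg) as [[X ->]|[[R ->]|[[R ->]|[R ->]]]];
          simpl in Hx; inversion Hx; subst.
      specialize (Hb _ (or_introl eq_refl)); simpl in Hb; tauto. }
    apply H; reflexivity.
  - intros N. apply (Gamma_rule J _ (Gr_q _ He)). simpl. intros l [<-|[]]; simpl; auto.
Qed.

Lemma Gamma_w J e : UP P0 tO e -> (Gamma P0 J (Ap cw e) <-> ~ J e).
Proof.
  intros He; split.
  - intros G.
    assert (H : (fun a => forall x, a = Ap cw x -> ~ J x) (Ap cw e)).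
    { refine (Gamma_ind J (fun a => forall x, a = Ap cw x -> ~ J x) _ _ G).
      intros g Hg Hb x Hx. destruct (Gr_inv g Hg) as [[X ->]|[[R ->]|[[R ->]|[R ->]]]];
          simpl in Hx; inversion Hx; subst.
      specialize (Hb _ (or_introl eq_refl)); simpl in Hb; tauto. }
    apply H; reflexivity.
  - intros N. apply (Gamma_rule J _ (Gr_w _ He)). simpl. intros l [<-|[]]; simpl; auto.
Qed.

Lemma Gamma_anti (J J' : term -> Prop) : (forall a, J a -> J' a) ->
  forall a, Gamma P0 J' a -> Gamma P0 J a.
Proof.
  intros HJ a G S HS. apply G. intros g Hg Hb. apply HS; auto.
  intros l Hl; specialize (Hb l Hl); destruct l; simpl in *; auto.
Qed.

Definition F J := Gamma P0 (Gamma P0 J).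

Lemma F_mono (J J' : term -> Prop) : (forall a, J a -> J' a) -> forall a, F J a -> F J' a.
Proof.
  intros H. unfold F. apply Gamma_anti. apply Gamma_anti. exact H.
Qed.

Lemma T_least S : (forall b, F S b -> S b) -> forall a, wf_true P0 a -> S a.
Proof. intros H a T. apply T. exact H. Qed.

Lemma T_fix a : wf_true P0 a <-> F (wf_true P0) a.
Proof.
  assert (H1 : forall a, F (wf_true P0) a -> wf_true P0 a).
  { intros b Fb S HS. apply HS. revert b Fb. apply F_mono. intros c Tc. apply Tc. exact HS. }
  split; [|apply H1].
  apply T_least. intros b Fb. revert b Fb. apply F_mono. exact H1.
Qed.

Lemma MP_congr a b : (wf_true P0 a <-> wf_true P0 b) ->
  (wf_nonfalse P0 a <-> wf_nonfalse P0 b) -> MP_val P0 a = MP_val P0 b.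
Proof.
  intros H1 H2. unfold MP_val.
  destruct (excluded_middle_informative (wf_true P0 a));
  destruct (excluded_middle_informative (wf_true P0 b)); try tauto;
  destruct (excluded_middle_informative (wf_nonfalse P0 a));
  destruct (excluded_middle_informative (wf_nonfalse P0 b)); tauto.
Qed.

Lemma MP_p e : UP P0 tO e -> MP_val P0 (Ap cp e) = MP_val P0 e.
Proof.
  intros He. apply MP_congr.
  - rewrite !T_fix. unfold F. apply Gamma_p; auto.
  - unfold wf_nonfalse. apply Gamma_p; auto.
Qed.

Lemma UP_w e : UP P0 tO e -> UP P0 tO (Ap cw e).
Proof.
  intros [H1 [H2 H3]]. split; [simpl; rewrite H1; reflexivity|]. split.
  - simpl. rewrite H2. reflexivity.
  - intros s Hs. simpl in Hs. destruct Hs as [<-|Hs]; auto. simpl; tauto.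
Qed.

Lemma MP_q e : UP P0 tO e -> MP_val P0 (Ap cq e) = MP_val P0 e.
Proof.
  intros He. apply MP_congr.
  - rewrite (T_fix (Ap cq e)). unfold F. rewrite Gamma_q by auto.
    rewrite Gamma_w by auto. split; [apply NNPP|tauto].
  - unfold wf_nonfalse. rewrite Gamma_q by auto. rewrite T_fix. unfold F.
    rewrite Gamma_w by auto. split; [apply NNPP|tauto].
Qed.

Lemma UP_oo c : In (c, oo) (prog_consts P0) -> UP P0 oo (C c oo).
Proof.
  intros H. split; [reflexivity|]. split; [reflexivity|].
  intros s [<-|[]]; auto.
Qed.

Lemma UP_sq : UP P0 tO (Ap cs cq).
Proof.
  split; [reflexivity|]. split; [reflexivity|].
  intros s Hs; simpl in Hs; destruct Hs as [<-|[<-|[]]]; simpl; tauto.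
Qed.

Lemma sp_false J : ~ Gamma P0 J (Ap cs cp).
Proof.
  intros G.
  assert (H : (fun a => a <> Ap cs cp /\ a <> Ap cp (Ap cs cp)) (Ap cs cp)).
  { refine (Gamma_ind J (fun a => a <> Ap cs cp /\ a <> Ap cp (Ap cs cp)) _ _ G).
    intros g Hg Hb. destruct (Gr_inv g Hg) as [[X ->]|[[R ->]|[[R ->]|[R ->]]]];
      specialize (Hb _ (or_introl eq_refl)); simpl in Hb |- *.
    - split; [|discriminate]. intros E; inversion E; subst. tauto.
    - split; [discriminate|]. intros E; inversion E; subst. tauto.
    - split; discriminate.
    - split; discriminate. }
  apply (proj1 H); reflexivity.
Qed.

Lemma v_sp : MP_val P0 (Ap cs cp) = vFalse.
Proof.
  unfold MP_val.
  destruct (excluded_middle_informative (wf_true P0 (Ap cs cp))) as [T|_].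
  - exfalso. rewrite T_fix in T. exact (sp_false _ T).
  - destruct (excluded_middle_informative (wf_nonfalse P0 (Ap cs cp))) as [T|_]; auto.
    exfalso. exact (sp_false _ T).
Qed.

Lemma nf_sq : wf_nonfalse P0 (Ap cs cq).
Proof.
  assert (NT : ~ wf_true P0 (Ap cw (Ap cs cq))).
  { intros T.
    assert (H : (fun b => b <> Ap cw (Ap cs cq)) (Ap cw (Ap cs cq))).
    { refine (T_least (fun b => b <> Ap cw (Ap cs cq)) _ _ T).
      intros b Fb E; subst b. unfold F in Fb.
      rewrite Gamma_w in Fb by exact UP_sq. apply Fb.
      apply (Gamma_rule _ _ (Gr_s _ (UP_oo 1 ltac:(simpl; tauto)))). simpl.
      intros l [<-|[]]; simpl. apply Gamma_q; [exact UP_sq|]. intros E; exact (E eq_refl). }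
    apply H; reflexivity. }
  unfold wf_nonfalse.
  apply (Gamma_rule _ _ (Gr_s _ (UP_oo 1 ltac:(simpl; tauto)))). simpl.
  intros l [<-|[]]; simpl. apply Gamma_q; [exact UP_sq|]. exact NT.
Qed.

Lemma v_sq : MP_val P0 (Ap cs cq) <> vFalse.
Proof.
  unfold MP_val.
  destruct (excluded_middle_informative (wf_true P0 (Ap cs cq))); [discriminate|].
  destruct (excluded_middle_informative (wf_nonfalse P0 (Ap cs cq))); [discriminate|].
  exfalso; apply n0; exact nf_sq.
Qed.

Theorem lemma1 : ~ extensional P0 (MP_val P0).
Proof.
  intros Hext.
  assert (UPs : UP P0 (tArr oo tO) cs).
  { split; [reflexivity|]. split; [reflexivity|]. intros s [<-|[]]; simpl; tauto. }
  specialize (Hext (tArr oo tO) eq_refl cs UPs). simpl in Hext.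
  specialize (Hext cp cq (UP_oo 0 ltac:(simpl; tauto)) (UP_oo 1 ltac:(simpl; tauto))).
  apply v_sq. rewrite <- v_sp. symmetry. apply Hext.
  intros e e' He He' Hv. rewrite MP_p, MP_q by auto. exact Hv.
Qed.
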